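(* Let $n\ge 1$ and let $P_n$ be the path on $n$ vertices. Then $$v(P_n)=\begin{cases}\lfloor n/4\rfloor & \text{if } n\equiv 0,1 \pmod 4,\\ \lfloor n/4\rfloor+1 & \text{if } n\equiv 2,3 \pmod 4.\end{cases}$$
   Context: Let $K$ be a field and $S=K[x_1,\dots,x_t]$ with the standard grading. For a proper graded ideal $I\subset S$, $\operatorname{Ass}(I)$ is the set of associated primes of $S/I$, and the $v$-number of $I$ is $v(I)=\min\{k\ge 0 : \exists f\in S_k \text{ and } \mathcal P\in\operatorname{Ass}(I) \text{ with } (I:f)=\mathcal P\}$. For a finite simple graph $G$ on vertex set $\{x_1,\dots,x_t\}$, the edge ideal is $I(G)=\langle x_ix_j : \{x_i,x_j\}\text{ an edge of } G\rangle\subset S$, and $v(G):=v(I(G))$. The path $P_n$ has vertices $x_1,\dots,x_n$ and edges $\{x_i,x_{i+1}\}$ for $1\le i\le n-1$. $\lfloor\cdot\rfloor$ is the integer part. *)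

(* Defs.v *)
From HB Require Import structures.
From mathcomp Require Import all_boot all_order all_algebra.
From mathcomp Require Import mpoly.
Set Implicit Arguments. Unset Strict Implicit. Unset Printing Implicit Defensive.
Import Order.TTheory GRing.Theory.
Local Open Scope ring_scope.

Section Ideals.
Variables (K : fieldType) (t : nat).
Local Notation S := {mpoly K[t]}.

Definition is_ideal (I : S -> Prop) : Prop :=
  [/\ I 0, (forall f g, I f -> I g -> I (f + g)) & (forall f g, I g -> I (f * g))].

Definition ideal_gen (gens : seq S) : S -> Prop :=
  fun f => exists c : 'I_(size gens) -> S, f = \sum_(i < size gens) c i * gens`_i.

Definition colon (I : S -> Prop) (f : S) : S -> Prop := fun g => I (g * f).

Definition is_prime_ideal (P : S -> Prop) : Prop :=
  [/\ is_ideal P, ~ P 1 & (forall f g, P (f * g) -> P f \/ P g)].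

Definition Ass (I : S -> Prop) (P : S -> Prop) : Prop :=
  is_prime_ideal P /\ exists g : S, forall h, P h <-> colon I g h.

(* k is attained in the set defining v(I): some f in S_k (homogeneous of
   degree k) and some P in Ass(I) with (I : f) = P. *)
Definition vnum_witness (I : S -> Prop) (k : nat) : Prop :=
  exists f : S, f \is k.-homog /\
    exists P, Ass I P /\ (forall h, colon I f h <-> P h).

Definition vnumber_is (I : S -> Prop) (k : nat) : Prop :=
  vnum_witness I k /\ (forall k', (k' < k)%N -> ~ vnum_witness I k').

(* Edge ideal of a simple graph on vertex set {x_0,...,x_(t-1)} given by a
   symmetric irreflexive relation e on 'I_t. *)
Definition edge_ideal (e : rel 'I_t) : S -> Prop :=
  ideal_gen [seq 'X_ij.1 * 'X_ij.2 | ij <- enum [pred ij : 'I_t * 'I_t | e ij.1 ij.2]].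

End Ideals.

Definition path_rel (n : nat) : rel 'I_n :=
  fun i j => ((i : nat).+1 == j) || ((j : nat).+1 == i).

Definition vP_formula (n : nat) : nat :=
  if (n %% 4 == 0)%N || (n %% 4 == 1)%N then (n %/ 4)%N else (n %/ 4).+1.

(* Main.v *)
Require Import Defs.
From HB Require Import structures.
From mathcomp Require Import all_boot all_order all_algebra.
From mathcomp Require Import mpoly.
From mathcomp Require Import zify.
Set Implicit Arguments. Unset Strict Implicit. Unset Printing Implicit Defensive.
Import Order.TTheory GRing.Theory.
Local Open Scope ring_scope.

Definition cvf (a : nat -> bool) (j : nat) : bool := ((0 < j)%N && a j.-1) || a j.+1.

Lemma comb (a : nat -> bool) (N : nat) :
  (forall j, (N <= j)%N -> a j = false) ->
  (forall i, (i.+1 < N)%N -> cvf a i || cvf a i.+1) ->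
  (N.-1 <= 4 * \sum_(0 <= j < N) nat_of_bool (a j))%N.
Proof.
move=> hout hcv.
case: N hout hcv => [|N] hout hcv; first by [].
set Sa := (\sum_(0 <= j < N.+1) nat_of_bool (a j))%N.
set Sc := (\sum_(0 <= j < N.+1) nat_of_bool (cvf a j))%N.
have h1 : (Sc <= 2 * Sa)%N.
  have e1 : (Sc <= \sum_(0 <= j < N.+1) (nat_of_bool ((0 < j)%N && a j.-1)
                 + nat_of_bool (a j.+1)))%N.
    by apply: leq_sum => j _; rewrite /cvf; lia.
  rewrite big_split /= in e1.
  have e2 : (\sum_(0 <= j < N.+1) nat_of_bool ((0 < j)%N && a j.-1) <= Sa)%N.
    rewrite big_nat_recl //= /Sa big_nat_recr //=; lia.
  have e3 : (\sum_(0 <= j < N.+1) nat_of_bool (a j.+1) <= Sa)%N.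
    rewrite big_nat_recr //= (hout N.+1) // /Sa big_nat_recl //=; lia.
  lia.
have h2 : (N <= 2 * Sc)%N.
  have e1 : (N <= \sum_(0 <= i < N) (nat_of_bool (cvf a i) + nat_of_bool (cvf a i.+1)))%N.
    apply: (@leq_trans (\sum_(0 <= i < N) 1)%N); first by rewrite sum_nat_const_nat; lia.
    rewrite [X in (X <= _)%N]big_seq [X in (_ <= X)%N]big_seq.
    apply: leq_sum => i hi'; have hi : (i < N)%N by move: hi'; rewrite mem_index_iota; lia.
    have := hcv i (leq_ltn_trans hi (ltnSn N)); lia.
  rewrite big_split /= in e1.
  have e2 : (\sum_(0 <= i < N) nat_of_bool (cvf a i) <= Sc)%N.
    rewrite /Sc big_nat_recr //=; lia.
  have e3 : (\sum_(0 <= i < N) nat_of_bool (cvf a i.+1) <= Sc)%N.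
    rewrite /Sc big_nat_recl //=; lia.
  lia.
simpl; lia.
Qed.

Lemma cnt4 N : (\sum_(0 <= j < N) nat_of_bool (j %% 4 == 2)%N)%N = (N.+1 %/ 4)%N.
Proof.
elim: N => [|N IH]; first by rewrite big_geq.
rewrite big_nat_recr //= IH; lia.
Qed.

Section Gen.
Variables (K : fieldType) (n : nat).
Local Notation S := {mpoly K[n]}.

Lemma ideal_sum (J : S -> Prop) (I : Type) (r : seq I) (P : pred I) (F : I -> S) :
  is_ideal J -> (forall i, P i -> J (F i)) -> J (\sum_(i <- r | P i) F i).
Proof. by case=> h0 hD _ hF; apply: big_ind. Qed.

Lemma ideal_gen_ideal (gens : seq S) : is_ideal (ideal_gen gens).
Proof.
split.
- by exists (fun _ => 0); rewrite big1 // => i _; rewrite mul0r.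
- move=> f g [c1 ->] [c2 ->]; exists (fun i => c1 i + c2 i).
  by rewrite -big_split; apply: eq_bigr => i _; rewrite mulrDl.
- move=> f g [c ->]; exists (fun i => f * c i).
  by rewrite mulr_sumr; apply: eq_bigr => i _; rewrite mulrA.
Qed.

Lemma ideal_gen_mem (gens : seq S) x : x \in gens -> ideal_gen gens x.
Proof.
move=> hx; have hk : (index x gens < size gens)%N by rewrite index_mem.
exists (fun i => ((i == Ordinal hk)%:R : S)).
rewrite (bigD1 (Ordinal hk)) //= eqxx mul1r big1 ?addr0; first by rewrite nth_index.
by move=> i /negbTE ->; rewrite mul0r.
Qed.

Lemma ideal_gen_sub (gens : seq S) (J : S -> Prop) :
  is_ideal J -> (forall x, x \in gens -> J x) -> forall f, ideal_gen gens f -> J f.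
Proof.
move=> hJ hg f [c ->]; apply: ideal_sum => // i _.
case: hJ => _ _ hM; apply: hM; apply: hg; exact: mem_nth.
Qed.

Definition Dn (pr : pred 'X_{1..n}) (h : S) : Prop := forall m, m \in msupp h -> pr m.
Definition upc (pr : pred 'X_{1..n}) := forall m1 m2, pr m2 -> pr (m1 + m2)%MM.
Definition coadd (pr : pred 'X_{1..n}) := forall m1 m2, pr (m1 + m2)%MM -> pr m1 || pr m2.

Lemma DnP pr h : Dn pr h <-> all pr (msupp h).
Proof. by split => [H|/allP H]; [apply/allP|]. Qed.

Lemma Dn_ideal pr : upc pr -> is_ideal (Dn pr).
Proof.
move=> hu; split.
- by move=> m; rewrite mcoeff_msupp mcoeff0 eqxx.
- move=> f g hf hg m /msuppD_le; rewrite mem_cat => /orP [] ?; [exact: hf | exact: hg].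
- move=> f g hg m /msuppM_le /allpairsP [[m1 m2] /= [_ h2 ->]]; exact: hu (hg _ h2).
Qed.

Definition lo (pr : pred 'X_{1..n}) (f : S) : S :=
  \sum_(m <- msupp f | ~~ pr m) f@_m *: 'X_[m].

Lemma lo_coeff pr f k : (lo pr f)@_k = if pr k then 0 else f@_k.
Proof.
rewrite /lo raddf_sum /= big_mkcond /=.
have -> : f@_k = (\sum_(m <- msupp f) f@_m *: 'X_[m])@_k by rewrite -mpolyE.
rewrite raddf_sum /=.
case: ifP => hk.
- rewrite big1 // => m _; case: ifP => // hm; rewrite mcoeffZ mcoeffX.
  case: eqP => [e|_]; last by rewrite mulr0.
  by rewrite e hk in hm.
- apply: eq_bigr => m _; case: ifP => // hm; rewrite mcoeffZ mcoeffX.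
  case: eqP => [e|_]; last by rewrite mulr0.
  by rewrite e hk in hm.
Qed.

Lemma lo_supp pr f m : m \in msupp (lo pr f) -> ~~ pr m.
Proof. by rewrite mcoeff_msupp lo_coeff; case: (pr m); rewrite ?eqxx. Qed.

Lemma hi_Dn pr f : Dn pr (f - lo pr f).
Proof.
by move=> m; rewrite mcoeff_msupp mcoeffB lo_coeff; case: (pr m) => //; rewrite subrr eqxx.
Qed.

Lemma Dn_prime pr : upc pr -> coadd pr -> ~~ pr 0%MM -> is_prime_ideal (Dn pr).
Proof.
move=> hu hc h0; have hid := Dn_ideal hu.
split => //.
- move=> H; move: (H 0%MM); rewrite mcoeff_msupp mcoeff1 eqxx oner_eq0 => /(_ isT).
  by rewrite (negbTE h0).
- move=> f g Hfg.
  case Hf: (all pr (msupp f)); first by left; apply/DnP.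
  case Hg: (all pr (msupp g)); first by right; apply/DnP.
  exfalso.
  have nzlo h : all pr (msupp h) = false -> lo pr h != 0.
    move=> /negbT /allPn [m hm npm]; apply/eqP => e.
    have := lo_coeff pr h m; rewrite (negbTE npm) e mcoeff0 => E.
    by move: hm; rewrite mcoeff_msupp -E eqxx.
  have nz : lo pr f * lo pr g != 0 by rewrite mulf_neq0 // nzlo.
  set m0 := mlead (lo pr f * lo pr g).
  have hm0 : m0 \in msupp (lo pr f * lo pr g) by exact: mlead_supp.
  have npm0 : ~~ pr m0.
    move: (msuppM_le hm0) => /allpairsP [[m1 m2] /= [h1 h2 ->]].
    apply/negP => /hc /orP [].
    + by apply/negP; exact: (lo_supp h1).
    + by apply/negP; exact: (lo_supp h2).
  set q := f * g - lo pr f * lo pr g.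
  have hq : Dn pr q.
    have -> : q = (f - lo pr f) * g + lo pr f * (g - lo pr g).
      by rewrite /q mulrBl mulrBr addrA subrK.
    case: hid => _ hD hM; apply: hD; last by apply: hM; apply: hi_Dn.
    by rewrite mulrC; apply: hM; apply: hi_Dn.
  have E : f * g = lo pr f * lo pr g + q by rewrite /q addrC subrK.
  have q0 : q@_m0 = 0.
    apply: memN_msupp_eq0; apply/negP => /hq; exact/negP.
  have : m0 \in msupp (f * g).
    by rewrite mcoeff_msupp E mcoeffD q0 addr0 -mcoeff_msupp.
  by move/Hfg; apply/negP.
Qed.

Lemma prime_ext (P Q : S -> Prop) : (forall h, P h <-> Q h) -> is_prime_ideal Q -> is_prime_ideal P.
Proof.
move=> e [[h0 hD hM] h1 hp]; split; first split.
- by apply/e.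
- by move=> f g /e ? /e ?; apply/e; apply: hD.
- by move=> f g /e ?; apply/e; apply: hM.
- by move/e.
- by move=> f g /e /hp [] ?; [left|right]; apply/e.
Qed.

Definition pgens : seq S :=
  [seq 'X_ij.1 * 'X_ij.2 | ij <- enum [pred ij : 'I_n * 'I_n | path_rel ij.1 ij.2]].

Lemma path_irr (i : 'I_n) : path_rel i i = false.
Proof. rewrite /path_rel; apply/negbTE; rewrite negb_or; apply/andP; split; lia. Qed.

Lemma path_sym (i j : 'I_n) : path_rel i j = path_rel j i.
Proof. by rewrite /path_rel orbC. Qed.

Lemma pgens_mem (i j : 'I_n) : path_rel i j -> 'X_i * 'X_j \in pgens.
Proof. by move=> hij; apply/mapP; exists (i, j) => //; rewrite mem_enum inE. Qed.

Definition ediv (m : 'X_{1..n}) : bool :=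
  [exists ij : 'I_n * 'I_n, [&& path_rel ij.1 ij.2, (0 < m ij.1)%N & (0 < m ij.2)%N]].

Lemma ediv_upc : upc ediv.
Proof.
move=> m1 m2 /existsP [ij /and3P [h a b]]; apply/existsP; exists ij.
by rewrite h !mnmDE; apply/andP; split; lia.
Qed.

Lemma pgens_Dn x : x \in pgens -> Dn ediv x.
Proof.
case/mapP => [[i j]]; rewrite mem_enum inE /= => hij ->.
rewrite -mpolyXD => m; rewrite msuppX mem_seq1 => /eqP ->.
apply/existsP; exists (i, j); rewrite /= hij !mnmDE !mnm1E !eqxx /=.
try lia.
Qed.

Lemma I_Dn f : ideal_gen pgens f -> Dn ediv f.
Proof. exact: (ideal_gen_sub (Dn_ideal ediv_upc) pgens_Dn). Qed.

Lemma Dn_I f : Dn ediv f -> ideal_gen pgens f.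
Proof.
move=> H; rewrite (mpolyE f) big_seq; apply: ideal_sum; first exact: ideal_gen_ideal.
move=> m hm.
case/existsP: (H m hm) => [[i j] /and3P [/= hij hi hj]].
have ne : i != j by apply: contraTneq hij => ->; rewrite path_irr.
have ne' : (j == i) = false by rewrite eq_sym; apply/negbTE.
set m' := (m - (U_(i) + U_(j)))%MM.
have Em : m = (m' + (U_(i) + U_(j)))%MM.
  apply/mnmP => k; rewrite mnmDE mnmBE !mnmDE !mnm1E.
  have [<-|ik] := eqVneq i k.
    by rewrite ne'; lia.
  have [<-|jk] := eqVneq j k.
    by rewrite ?(negbTE ik); lia.
  by rewrite ?(negbTE ik) ?(negbTE jk); lia.
rewrite {2}Em !mpolyXD scalerAl.
case: (ideal_gen_ideal pgens) => _ _ hM; apply: hM.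
exact: ideal_gen_mem (pgens_mem hij).
Qed.

Lemma shift_supp (h : S) m m' : m \in msupp h -> (m' + m)%MM \in msupp (h * 'X_[m']).
Proof. by rewrite !mcoeff_msupp mcoeffMX. Qed.

Lemma shift_supp_inv (h : S) m' m'' :
  m'' \in msupp (h * 'X_[m']) -> exists2 m, m \in msupp h & m'' = (m' + m)%MM.
Proof. by rewrite (perm_mem (msuppMX h m')) => /mapP [m hm ->]; exists m. Qed.

Definition cov (m : 'X_{1..n}) (v : 'I_n) := [exists w : 'I_n, path_rel v w && (0 < m w)%N].

Lemma lower k : vnum_witness (@edge_ideal K n (@path_rel n)) k -> (vP_formula n <= k)%N.
Proof.
case=> f [hf [P [[[hPid hP1 hPpr] _] hcol]]].
have nIf : ~ ideal_gen pgens f.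
  by move=> H; apply: hP1; apply/hcol; rewrite /colon mul1r.
have [m hm nm] : exists2 m, m \in msupp f & ~~ ediv m.
  case E: (all ediv (msupp f)).
    by exfalso; apply: nIf; apply: Dn_I; apply/DnP.
  by move/negbT/allPn: E => [m hm nm]; exists m.
have degm : mdeg m = k by move/dhomogP: hf => /(_ m hm).
have covP (v : 'I_n) : P 'X_v -> cov m v.
  move=> /hcol; rewrite /colon mulrC => /I_Dn H.
  case/existsP: (H _ (shift_supp U_(v) hm)) => [[a b] /and3P [/= hab ha hb]].
  rewrite !mnmDE !mnm1E in ha hb.
  have [ev|nv] := eqVneq v a.
  - subst v; apply/existsP; exists b; rewrite hab /=.
    have e : (a == b) = false by apply/negbTE; apply: contraTneq hab => ->; rewrite path_irr.
    by rewrite e add0n in hb.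
  - rewrite (negbTE nv) add0n in ha.
    have [eb|nb] := eqVneq v b.
    + subst v; apply/existsP; exists a; by rewrite path_sym hab.
    + rewrite (negbTE nb) add0n in hb.
      exfalso; move/negP: nm; apply; apply/existsP; exists (a, b); by rewrite hab ha hb.
have hedge (i j : 'I_n) : path_rel i j -> cov m i || cov m j.
  move=> hij.
  have : P ('X_i * 'X_j).
    apply/hcol; rewrite /colon; case: (ideal_gen_ideal pgens) => _ _ hM.
    rewrite mulrC; apply: hM; exact: ideal_gen_mem (pgens_mem hij).
  by case/hPpr => /covP ->; rewrite ?orbT.
pose a j := [exists i : 'I_n, (val i == j) && (0 < m i)%N].
have aout j : (n <= j)%N -> a j = false.
  move=> hj; apply/negbTE/existsP => [[i /andP [/eqP e _]]].
  by move: (ltn_ord i); rewrite e; lia.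
have aval (i : 'I_n) : a i = (0 < m i)%N.
  apply/existsP/idP => [[i' /andP [/eqP e h]]|h]; last by exists i; rewrite eqxx.
  by have <- : i' = i by apply: val_inj.
have cov_cv (v : 'I_n) : cov m v -> cvf a v.
  case/existsP => w /andP [hvw hw]; rewrite /cvf.
  case/orP: hvw => /eqP e.
  + by apply/orP; right; rewrite e aval.
  + apply/orP; left; rewrite -e /= aval; exact: hw.
have hcv i : (i.+1 < n)%N -> cvf a i || cvf a i.+1.
  move=> hi.
  have hi0 : (i < n)%N by lia.
  have hp : path_rel (Ordinal hi0) (Ordinal hi) by rewrite /path_rel /= eqxx.
  have := hedge _ _ hp.
  by case/orP => /cov_cv /= ->; rewrite ?orbT.
have := comb aout hcv.
have Sa : (\sum_(0 <= j < n) nat_of_bool (a j) <= k)%N.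
  rewrite -degm mdegE big_mkord; apply: leq_sum => i _; rewrite aval; lia.
move=> hc; rewrite /vP_formula; case: ifP; lia.
Qed.

Definition sel (j : nat) : bool := (j %% 4 == 2)%N || ((j.+1 == n) && (n %% 4 == 2)%N).
Definition mA : 'X_{1..n} := [multinom nat_of_bool (sel i) | i < n].
Definition Nbo (v : 'I_n) := [exists w : 'I_n, path_rel v w && sel w].
Definition meets (m : 'X_{1..n}) := [exists v : 'I_n, Nbo v && (0 < m v)%N].

Lemma mAE (i : 'I_n) : mA i = sel i.
Proof. by rewrite /mA mnmE. Qed.

Definition Nbn v := ((v.+1 < n)%N && sel v.+1) || ((0 < v)%N && sel v.-1).

Lemma sel_cover i : (i.+1 < n)%N -> Nbn i || Nbn i.+1.
Proof. rewrite /Nbn /sel; lia. Qed.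

Lemma sel_indep a w : (a.+1 == w) || (w.+1 == a) -> (a < n)%N -> (w < n)%N -> ~~ (sel a && sel w).
Proof. rewrite /sel; lia. Qed.

Lemma Nbn_Nbo (v : 'I_n) : Nbn v -> Nbo v.
Proof.
case/orP => /andP [h1 h2].
- by apply/existsP; exists (Ordinal h1); rewrite /path_rel /= eqxx.
- have h : (v.-1 < n)%N by have := ltn_ord v; lia.
  apply/existsP; exists (Ordinal h); rewrite /path_rel /= h2 andbT; apply/orP; right.
  apply/eqP; lia.
Qed.

Lemma cover_ord (a b : 'I_n) : path_rel a b -> Nbo a || Nbo b.
Proof.
case/orP => /eqP e.
- have hlt : (a.+1 < n)%N by rewrite e.
  case/orP: (sel_cover hlt) => h.
  + by rewrite (Nbn_Nbo h).
  + by rewrite e in h; rewrite (Nbn_Nbo h) orbT.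
- have hlt : (b.+1 < n)%N by rewrite e.
  case/orP: (sel_cover hlt) => h.
  + by rewrite (Nbn_Nbo h) orbT.
  + by rewrite e in h; rewrite (Nbn_Nbo h).
Qed.

Lemma indep_ord (a w : 'I_n) : path_rel a w -> ~~ (sel a && sel w).
Proof. move=> h; exact: sel_indep h (ltn_ord a) (ltn_ord w). Qed.

Lemma meets_upc : upc meets.
Proof.
move=> m1 m2 /existsP [v /andP [h1 h2]]; apply/existsP; exists v.
by rewrite h1 mnmDE; lia.
Qed.

Lemma meets_coadd : coadd meets.
Proof.
move=> m1 m2 /existsP [v /andP [h1 h2]]; rewrite mnmDE in h2.
case: (posnP (m1 v)) => [e|p].
- by apply/orP; right; apply/existsP; exists v; rewrite h1; lia.
- by apply/orP; left; apply/existsP; exists v; rewrite h1 p.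
Qed.

Lemma meets0 : ~~ meets 0%MM.
Proof. by apply/existsP => [[v /andP [_]]]; rewrite mnm0E. Qed.

Lemma colonE h : colon (@edge_ideal K n (@path_rel n)) 'X_[mA] h <-> Dn meets h.
Proof.
split.
- rewrite /colon => /I_Dn H m hm.
  case/existsP: (H _ (shift_supp mA hm)) => [[a b] /and3P [/= hab ha hb]].
  rewrite !mnmDE !mAE in ha hb.
  case/orP: (cover_ord hab) => hN.
  + case: (posnP (m a)) => [ma0|mapos].
    * exfalso; case/existsP: hN => w /andP [haw sw].
      have sa : sel a by move: ha; rewrite ma0; case: (sel a).
      by move/negP: (indep_ord haw); apply; rewrite sa sw.
    * by apply/existsP; exists a; rewrite hN mapos.
  + case: (posnP (m b)) => [mb0|mbpos].
    * exfalso; case/existsP: hN => w /andP [hbw sw].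
      have sb : sel b by move: hb; rewrite mb0; case: (sel b).
      by move/negP: (indep_ord hbw); apply; rewrite sb sw.
    * by apply/existsP; exists b; rewrite hN mbpos.
- move=> H; apply: Dn_I => m'' /shift_supp_inv [m hm ->].
  case/existsP: (H m hm) => v /andP [/existsP [w /andP [hvw sw]] mv].
  apply/existsP; exists (v, w); rewrite /= hvw !mnmDE !mAE.
  by move: sw mv; case: (sel w); case: (sel v) => //=; lia.
Qed.

Lemma sum_sel : (1 <= n)%N -> (\sum_(0 <= j < n) nat_of_bool (sel j))%N = vP_formula n.
Proof.
move=> hn; rewrite /sel.
have [n' en] : exists n', n = n'.+1 by exists n.-1; lia.
rewrite en big_nat_recr //=.
rewrite (@eq_big_nat _ _ _ 0 n' _ (fun j => nat_of_bool (j %% 4 == 2)%N)); last first.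
  move=> j /andP [_ hj]; congr nat_of_bool.
  have -> : (j.+1 == n'.+1) = false by apply/negbTE; lia.
  by rewrite andFb orbF.
rewrite cnt4 /vP_formula; case: ifP; lia.
Qed.

Lemma upper : (1 <= n)%N -> vnum_witness (@edge_ideal K n (@path_rel n)) (vP_formula n).
Proof.
move=> hn; exists 'X_[mA]; split.
  rewrite dhomogX; apply/eqP.
  have e : mdeg mA = vP_formula n.
    rewrite mdegE -(sum_sel hn) big_mkord; apply: eq_bigr => i _; by rewrite mAE.
  exact: e.
exists (colon (@edge_ideal K n (@path_rel n)) 'X_[mA]); split; last by [].
split; last by exists 'X_[mA].
apply: prime_ext colonE _.
exact: Dn_prime meets_upc meets_coadd meets0.
Qed.

End Gen.

Theorem theorem3p1 (K : fieldType) (n : nat) (hn : (1 <= n)%N) :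
  vnumber_is (@edge_ideal K n (@path_rel n)) (vP_formula n).
Proof.
split; first exact: upper.
by move=> k' hk' /lower; rewrite leqNgt hk'.
Qed.
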